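(* Let $\mathcal{M}=((X,\mathcal{C}),\mathcal{V})$ be a closure model and $(X,\eta)$ its associated closure coalgebra. Then for all $x,y\in X$: $x\equiv_{IML}y$ if and only if $x$ and $y$ are behaviourally equivalent in $(X,\eta)$, i.e. there exist a $\mathbf{C}$-coalgebra $(Y,\theta)$ and a coalgebra homomorphism $f:(X,\eta)\to(Y,\theta)$ with $f(x)=f(y)$.
   Context: Closure space $(X,\mathcal{C})$: $X$ non-empty, $\mathcal{C}:\mathcal{P}(X)\to\mathcal{P}(X)$ with $\mathcal{C}(\emptyset)=\emptyset$, $A\subseteq\mathcal{C}(A)$, $\mathcal{C}(A_1\cup A_2)=\mathcal{C}(A_1)\cup\mathcal{C}(A_2)$; closure model adds $\mathcal{V}:AP\to\mathcal{P}(X)$, $\mathcal{V}^{-1}(x)=\{p\mid x\in\mathcal{V}(p)\}$. IML formulas: $\Phi::=p\mid\neg\Phi\mid\bigwedge_{i\in I}\Phi_i\mid\mathcal{N}\Phi$ ($I$ any set); $x\models p$ iff $x\in\mathcal{V}(p)$, negation and conjunction standard, $x\models\mathcal{N}\Phi$ iff $x\in\mathcal{C}(\{y\mid y\models\Phi\})$; $\equiv_{IML}$ means satisfying the same IML formulas. Closure functor $\mathbf{C}X=\mathcal{P}(AP)\times\mathcal{P}(\mathcal{P}(X))$ with $\mathbf{C}f(v,S)=(v,\{f[A]\mid A\in S\})$ (covariant powerset, $f[A]$ the direct image). Associated closure coalgebra: $\eta(x)=(\mathcal{V}^{-1}(x),\{A\subseteq X\mid x\in\mathcal{C}(A)\})$.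 A homomorphism $f:(X,\eta)\to(Y,\theta)$ satisfies $\theta\circ f=(\mathbf{C}f)\circ\eta$. *)

(* Defs.v *)
Set Implicit Arguments.

Definition set (T : Type) := T -> Prop.
Definition set0 {T : Type} : set T := fun _ => False.
Definition setU {T : Type} (A B : set T) : set T := fun x => A x \/ B x.
Definition subset {T : Type} (A B : set T) : Prop := forall x, A x -> B x.

Record closure_space (X : Type) := {
  cl : set X -> set X;
  cl_nonempty : exists x : X, True;
  cl_empty : forall x, cl set0 x <-> set0 x;
  cl_extensive : forall A, subset A (cl A);
  cl_union : forall A1 A2 x, cl (setU A1 A2) x <-> setU (cl A1) (cl A2) x
}.

Record closure_model (AP X : Type) := {
  cspace : closure_space X;
  val : AP -> set X
}.

Inductive iml (AP : Type) : Type :=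
| Atom : AP -> iml AP
| Neg : iml AP -> iml AP
| BigAnd : forall (I : Type), (I -> iml AP) -> iml AP
| Near : iml AP -> iml AP.

Fixpoint sat {AP X : Type} (M : closure_model AP X) (x : X) (phi : iml AP) : Prop :=
  match phi with
  | Atom p => val M p x
  | Neg phi' => ~ sat M x phi'
  | @BigAnd _ J phis => forall i : J, sat M x (phis i)
  | Near phi' => cl (cspace M) (fun y => sat M y phi') x
  end.

Definition iml_equiv {AP X : Type} (M : closure_model AP X) (x y : X) : Prop :=
  forall phi : iml AP, sat M x phi <-> sat M y phi.

Definition CF (AP X : Type) : Type := (set AP * set (set X))%type.

Definition image {X Y : Type} (f : X -> Y) (A : set X) : set Y :=
  fun y => exists a, A a /\ f a = y.

Definition CF_map {AP X Y : Type} (f : X -> Y) (c : CF AP X) : CF AP Y :=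
  (fst c, fun B : set Y => exists A : set X, snd c A /\ B = image f A).

Definition eta {AP X : Type} (M : closure_model AP X) (x : X) : CF AP X :=
  (fun p => val M p x, fun A => cl (cspace M) A x).

Definition is_hom {AP X Y : Type} (eta0 : X -> CF AP X) (theta : Y -> CF AP Y)
  (f : X -> Y) : Prop :=
  forall x, theta (f x) = CF_map f (eta0 x).

Definition behav_equiv {AP X : Type} (M : closure_model AP X) (x y : X) : Prop :=
  exists (Y : Type) (theta : Y -> CF AP Y) (f : X -> Y),
    is_hom (eta M) theta f /\ f x = f y.

(* Main.v *)
Require Import Defs.
From Stdlib Require Import Classical ClassicalEpsilon FunctionalExtensionality PropExtensionality.

Lemma set_ext {T : Type} (A B : set T) : (forall z, A z <-> B z) -> A = B.
Proof. intro H; apply functional_extensionality; intro z; apply propositional_extensionality; auto. Qed.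

Lemma cl_mono {X : Type} (C : closure_space X) (A B : set X) x :
  subset A B -> cl C A x -> cl C B x.
Proof.
  intros HS HA.
  assert (E : setU A B = B).
  { apply set_ext; intro z; unfold setU; split; auto. intros [h|h]; auto. }
  rewrite <- E. apply (cl_union C). left; exact HA.
Qed.

Section Dir1.
Variables (AP X Y : Type) (M : closure_model AP X) (theta : Y -> CF AP Y) (f : X -> Y).
Hypothesis H : is_hom (eta M) theta f.

Lemma snd_theta a B : snd (theta (f a)) B <-> exists A, cl (cspace M) A a /\ B = image f A.
Proof. rewrite H. simpl. tauto. Qed.

Lemma fst_theta a : fst (theta (f a)) = fun p => val M p a.
Proof. rewrite H. reflexivity. Qed.

Lemma sat_hom phi : forall a b, f a = f b -> sat M a phi -> sat M b phi.
Proof.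
  induction phi as [p|phi IH|I phis IH|phi IH]; intros a b Hab; simpl.
  - intro Hp. pose proof (fst_theta a) as Ea. pose proof (fst_theta b) as Eb.
    rewrite Hab in Ea. rewrite Ea in Eb. exact (eq_ind _ (fun g => g p) Hp _ Eb).
  - intros Hn Hb. apply Hn. apply (IH b a); auto.
  - intros Hi i. apply (IH i a b); auto.
  - intro Hc.
    assert (Hs : snd (theta (f a)) (image f (fun y => sat M y phi))).
    { apply snd_theta. exists (fun y => sat M y phi); split; auto. }
    rewrite Hab in Hs. apply snd_theta in Hs. destruct Hs as [A [HA HE]].
    apply (cl_mono (cspace M) A); auto.
    intros w Hw.
    assert (Hi : image f A (f w)) by (exists w; auto).
    rewrite <- HE in Hi. destruct Hi as [z [Hz Hzw]].
    apply (IH z w); auto.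
Qed.
End Dir1.

Section Dir2.
Variables (AP X : Type) (M : closure_model AP X).

Lemma ieq_refl a : iml_equiv M a a.
Proof. intro; tauto. Qed.
Lemma ieq_sym {a b} : iml_equiv M a b -> iml_equiv M b a.
Proof. intros H phi; specialize (H phi); tauto. Qed.
Lemma ieq_trans {a b c} : iml_equiv M a b -> iml_equiv M b c -> iml_equiv M a c.
Proof. intros H1 H2 phi; specialize (H1 phi); specialize (H2 phi); tauto. Qed.

Definition fq (a : X) : set X := fun z => iml_equiv M a z.

Lemma fq_eq {a b} : fq a = fq b -> iml_equiv M a b.
Proof. intro E. assert (h := equal_f E b). unfold fq in h. rewrite h. apply ieq_refl. Qed.

Lemma eq_fq {a b} : iml_equiv M a b -> fq a = fq b.
Proof.
  intro E. apply set_ext; intro z; unfold fq; split; intro h.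
  - exact (ieq_trans (ieq_sym E) h).
  - exact (ieq_trans E h).
Qed.

Definition iml_inh : inhabited (iml AP) := inhabits (@BigAnd AP False (fun h => False_rect _ h)).

Definition dist (w z : X) : iml AP :=
  epsilon iml_inh (fun phi => sat M w phi /\ ~ sat M z phi).

Lemma dist_spec {w z} : ~ iml_equiv M w z -> sat M w (dist w z) /\ ~ sat M z (dist w z).
Proof.
  intro Hn. unfold dist. apply epsilon_spec.
  apply not_all_ex_not in Hn. destruct Hn as [phi Hphi].
  destruct (classic (sat M w phi)) as [h|h].
  - exists phi; split; auto. intro h'; apply Hphi; tauto.
  - exists (Neg phi); simpl; split; auto. intro h'; apply h'. apply NNPP; intro h''. apply Hphi; tauto.
Qed.

Definition chi (w : X) : iml AP :=
  @BigAnd AP {z : X | ~ iml_equiv M w z} (fun z => dist w (proj1_sig z)).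

Lemma chi_spec w u : sat M u (chi w) <-> iml_equiv M w u.
Proof.
  simpl. split.
  - intro Hs. apply NNPP. intro Hn. destruct (dist_spec Hn) as [_ h2].
    apply h2. exact (Hs (exist _ u Hn)).
  - intros E [z Hz]. simpl. apply (E (dist w z)). apply (dist_spec Hz).
Qed.

Definition psi (A : set X) : iml AP :=
  Neg (@BigAnd AP {w : X | A w} (fun w => Neg (chi (proj1_sig w)))).

Lemma psi_spec A u : sat M u (psi A) <-> exists w, A w /\ iml_equiv M w u.
Proof.
  simpl. split.
  - intro h. apply NNPP. intro hn. apply h. intros [w Hw] hc. simpl in hc.
    apply hn. exists w. split; auto. apply chi_spec; auto.
  - intros [w [Hw E]] h. apply (h (exist _ w Hw)). simpl. apply chi_spec; auto.
Qed.

Definition thetaq (c : set X) : CF AP (set X) :=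
  (fun p => exists a, c = fq a /\ val M p a,
   fun B => exists a, c = fq a /\ exists A, cl (cspace M) A a /\ B = image fq A).

Lemma key {a a' A} : iml_equiv M a a' -> cl (cspace M) A a' ->
  exists A', cl (cspace M) A' a /\ image fq A = image fq A'.
Proof.
  intros E HA.
  set (S := fun z => exists w, A w /\ iml_equiv M w z).
  exists S. split.
  - assert (HS : S = fun y => sat M y (psi A)).
    { apply set_ext; intro z. rewrite psi_spec. tauto. }
    assert (h : sat M a' (Near (psi A))).
    { change (cl (cspace M) (fun y => sat M y (psi A)) a'). rewrite <- HS. apply (cl_mono (cspace M) A); auto.
      intros w Hw. exists w; split; auto. apply ieq_refl. }
    apply (E (Near (psi A))) in h. change (cl (cspace M) (fun y => sat M y (psi A)) a) in h. rewrite <- HS in h. exact h.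
  - apply set_ext; intro B; split.
    + intros [w [Hw Hf]]. exists w; split; auto. exists w; split; auto. apply ieq_refl.
    + intros [z [[w [Hw Ew]] Hf]]. exists w; split; auto. rewrite <- Hf. apply eq_fq; auto.
Qed.

Lemma thetaq_hom : is_hom (eta M) thetaq fq.
Proof.
  intro a. unfold thetaq, CF_map, eta; simpl. f_equal.
  - apply set_ext; intro p; split.
    + intros [a' [Ea Hv]]. apply fq_eq in Ea. apply (Ea (Atom p)). exact Hv.
    + intro h. exists a; split; auto.
  - apply set_ext; intro B; split.
    + intros [a' [Ea [A [HA HB]]]]. apply fq_eq in Ea.
      destruct (key Ea HA) as [A' [HA' HE]]. exists A'; split; auto. rewrite HB; auto.
    + intros [A [HA HB]]. exists a; split; auto. exists A; auto.
Qed.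
End Dir2.

Theorem theorem4 (AP X : Type) (M : closure_model AP X) (x y : X) :
  iml_equiv M x y <-> behav_equiv M x y.
Proof.
  split.
  - intro E. exists (set X), (@thetaq AP X M), (@fq AP X M). split.
    + apply thetaq_hom.
    + apply eq_fq; auto.
  - intros [Y [theta [f [Hh Hf]]]] phi. split.
    + apply (@sat_hom AP X Y M theta f Hh); auto.
    + apply (@sat_hom AP X Y M theta f Hh); auto.
Qed.
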